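(* Let $\{f_i\}_{i\in I}$ be a Parseval frame for a Hilbert space $\mathbb H$. Then for every subset $J\subset I$ and every $f\in\mathbb H$, $$\sum_{i\in J}|\langle f,f_i\rangle|^2-\Big\|\sum_{i\in J}\langle f,f_i\rangle f_i\Big\|^2=\sum_{i\in J^c}|\langle f,f_i\rangle|^2-\Big\|\sum_{i\in J^c}\langle f,f_i\rangle f_i\Big\|^2,$$ where $J^c=I\setminus J$.
   Context: A family $\{f_i\}_{i\in I}$ in a Hilbert space $\mathbb H$ is a Parseval frame if $\sum_{i\in I}|\langle f,f_i\rangle|^2=\|f\|^2$ for all $f\in\mathbb H$. *)

(* Defs.v *)
From HB Require Import structures.
From mathcomp Require Import all_boot all_order all_algebra.
From mathcomp Require Import finmap.
From mathcomp Require Import boolp classical_sets reals.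
From mathcomp.real_closed Require Import complex.
Set Implicit Arguments. Unset Strict Implicit. Unset Printing Implicit Defensive.
Import Order.TTheory GRing.Theory Num.Theory Num.Def.
Local Open Scope ring_scope.
Local Open Scope classical_set_scope.

Definition is_inner_product (R : realType) (H : lmodType R[i])
    (ip : H -> H -> R[i]) : Prop :=
  [/\ forall (a : R[i]) (x y z : H), ip (a *: x + y) z = a * ip x z + ip y z,
      forall x y : H, ip y x = (ip x y)^*,
      forall x : H, 0 <= ip x x &
      forall x : H, ip x x = 0 -> x = 0].

Definition hnorm (R : realType) (H : lmodType R[i]) (ip : H -> H -> R[i])
    (x : H) : R[i] := sqrtC (ip x x).

Definition ip_complete (R : realType) (H : lmodType R[i])
    (ip : H -> H -> R[i]) : Prop :=
  forall u : nat -> H,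
    (forall e : R[i], 0 < e -> exists N : nat, forall m n : nat,
        (N <= m)%N -> (N <= n)%N -> hnorm ip (u m - u n) < e) ->
    exists l : H, forall e : R[i], 0 < e -> exists N : nat, forall n : nat,
        (N <= n)%N -> hnorm ip (u n - l) < e.

Definition is_hilbert (R : realType) (H : lmodType R[i])
    (ip : H -> H -> R[i]) : Prop :=
  is_inner_product ip /\ ip_complete ip.

(** Unconditional summation over an arbitrary index set [J : set I]:
    [has_sum nrm J g s] means that the net of finite partial sums
    \sum_(i <- F) g i, F ranging over the finite subsets of J ordered by
    inclusion, converges to [s] for the (semi)norm [nrm]. *)
Definition has_sum (R : realType) (V : zmodType) (nrm : V -> R[i])
    (I : choiceType) (J : set I) (g : I -> V) (s : V) : Prop :=
  forall e : R[i], 0 < e ->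
    exists F0 : {fset I}, (forall i, i \in F0 -> J i) /\
      forall F : {fset I}, (forall i, i \in F -> J i) -> fsubset F0 F ->
        nrm (s - \sum_(i <- F) g i) < e.

Definition parseval_frame (R : realType) (H : lmodType R[i])
    (ip : H -> H -> R[i]) (I : choiceType) (fr : I -> H) : Prop :=
  forall f : H,
    has_sum (fun z : R[i] => `|z|) setT (fun i => `|ip f (fr i)| ^+ 2)
      (hnorm ip f ^+ 2).

(* Main.v *)
Require Import Defs.
From HB Require Import structures.
From mathcomp Require Import all_boot all_order all_algebra.
From mathcomp Require Import finmap.
From mathcomp Require Import boolp classical_sets reals.
From mathcomp.real_closed Require Import complex.
From mathcomp Require Import ring lra.
Import Order.TTheory GRing.Theory Num.Theory Num.Def.
Set Implicit Arguments. Unset Strict Implicit. Unset Printing Implicit Defensive.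
Local Open Scope ring_scope.
Local Open Scope classical_set_scope.
Local Open Scope complex_scope.

Section IP.
Variables (R : realType) (H : lmodType R[i]) (ip : H -> H -> R[i]).
Hypothesis hip : is_inner_product ip.
Local Notation C := (R[i]).

Lemma ipDZl a x y z : ip (a *: x + y) z = a * ip x z + ip y z.
Proof. by move: hip => [h _ _ _]; apply: h. Qed.
Lemma ipC x y : ip y x = conjC (ip x y).
Proof. by move: hip => [_ h _ _]; apply: h. Qed.
Lemma ip_ge0 x : 0 <= ip x x.
Proof. by move: hip => [_ _ h _]; apply: h. Qed.
Lemma ip_eq0 x : ip x x = 0 -> x = 0.
Proof. by move: hip => [_ _ _ h]; apply: h. Qed.

Lemma ipDl x y z : ip (x + y) z = ip x z + ip y z.
Proof. by rewrite -{1}(scale1r x) ipDZl mul1r. Qed.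
Lemma ip0l z : ip 0 z = 0.
Proof.
have := ipDl 0 0 z; rewrite addr0 => /(congr1 (fun t => t - ip 0 z)).
by rewrite subrr addrK => ->.
Qed.
Lemma ipZl a x z : ip (a *: x) z = a * ip x z.
Proof. by rewrite -(addr0 (a *: x)) ipDZl ip0l addr0. Qed.
Lemma ipNl x z : ip (- x) z = - ip x z.
Proof. by rewrite -scaleN1r ipZl mulN1r. Qed.
Lemma ipBl x y z : ip (x - y) z = ip x z - ip y z.
Proof. by rewrite ipDl ipNl. Qed.
Lemma ipDr x y z : ip z (x + y) = ip z x + ip z y.
Proof. by rewrite [ip z (x + y)]ipC [ip z x]ipC [ip z y]ipC ipDl rmorphD. Qed.
Lemma ipZr a x z : ip z (a *: x) = conjC a * ip z x.
Proof. by rewrite [ip z _]ipC [ip z x]ipC ipZl rmorphM. Qed.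
Lemma ip0r z : ip z 0 = 0.
Proof. by rewrite ipC ip0l rmorph0. Qed.
Lemma ipNr x z : ip z (- x) = - ip z x.
Proof. by rewrite [ip z _]ipC [ip z x]ipC ipNl rmorphN. Qed.
Lemma ipBr x y z : ip z (x - y) = ip z x - ip z y.
Proof. by rewrite ipDr ipNr. Qed.
Lemma ip_suml (I : Type) (s : seq I) (P : pred I) (v : I -> H) z :
  ip (\sum_(i <- s | P i) v i) z = \sum_(i <- s | P i) ip (v i) z.
Proof.
elim: s => [|a s IH]; first by rewrite !big_nil ip0l.
by rewrite !big_cons; case: (P a); rewrite ?ipDl IH.
Qed.
Lemma ip_sumr (I : Type) (s : seq I) (P : pred I) (v : I -> H) z :
  ip z (\sum_(i <- s | P i) v i) = \sum_(i <- s | P i) ip z (v i).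
Proof.
elim: s => [|a s IH]; first by rewrite !big_nil ip0r.
by rewrite !big_cons; case: (P a); rewrite ?ipDr IH.
Qed.

Lemma ip_real x : conjC (ip x x) = ip x x.
Proof. by apply/CrealP; apply: ger0_real; apply: ip_ge0. Qed.

Definition Q x := complex.Re (ip x x).
Lemma QE x : ip x x = (Q x)%:C.
Proof. by rewrite /Q RRe_real // ger0_real // ip_ge0. Qed.
Lemma Q_ge0 x : 0 <= Q x.
Proof. by rewrite -ler0c -QE ip_ge0. Qed.

Lemma hnormE x : hnorm ip x = sqrtC (ip x x).
Proof. by []. Qed.

Lemma hnorm_lt x (e : R) : 0 < e -> (hnorm ip x < e%:C) = (Q x < e ^+ 2).
Proof.
move=> e0; rewrite hnormE.
rewrite -{1}(@sqrCK _ e%:C) ?ler0c ?ltW // ltr_sqrtC ?qualifE /= ?ip_ge0 //.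
  by rewrite QE -rmorphXn ltcR.
by rewrite exprn_ge0 // ler0c ltW.
Qed.

Lemma hnorm_sqr x : hnorm ip x ^+ 2 = ip x x.
Proof. by rewrite hnormE sqrtCK. Qed.


Lemma parallelogram x y : Q (x + y) + Q (x - y) = 2 * Q x + 2 * Q y.
Proof.
apply: complexI; rewrite !rmorphD !rmorphM /= -!QE rmorph_nat.
rewrite !ipDl !ipDr ?ipNl ?ipNr ?ipDr; ring.
Qed.

Lemma Q_add_le x y : Q (x + y) <= 2 * Q x + 2 * Q y.
Proof. by rewrite -parallelogram lerDl Q_ge0. Qed.

Lemma QN x : Q (- x) = Q x.
Proof. by rewrite /Q ipNl ipNr opprK. Qed.

Lemma CS x y : `|ip x y| <= hnorm ip x * hnorm ip y.
Proof.
have hge z : 0 <= hnorm ip z by rewrite hnormE sqrtC_ge0 ip_ge0.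
case: (eqVneq y 0) => [->|y0]; first by rewrite ip0r normr0 mulr_ge0.
have t0 : 0 < ip y y.
  by rewrite lt_def ip_ge0 andbT; apply/eqP => /ip_eq0; apply/eqP.
set z := ip x y; set t := ip y y.
set a := z / t.
have := ip_ge0 (x - a *: y).
rewrite ipBl !ipBr !ipZl !ipZr -/z -/t [ip y x]ipC -/z.
have -> : conjC a = conjC z / t by rewrite /a rmorphM fmorphV /= ip_real.
have -> : ip x x - conjC z / t * z - (a * conjC z - a * (conjC z / t * t))
   = ip x x - z * conjC z / t.
  rewrite /a; field; exact: lt0r_neq0.
rewrite subr_ge0 ler_pdivrMr // -normCK => h.
rewrite !hnormE -sqrtCM ?qualifE /= ?ip_ge0 //.
by rewrite -(@sqrCK _ `|z|) // ler_sqrtC ?qualifE /= ?exprn_ge0 ?mulr_ge0 ?ip_ge0 // ltW.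
Qed.


Lemma conjD (a b : C) : conjC (a + b) = conjC a + conjC b.
Proof. exact: rmorphD. Qed.
Lemma conjB (a b : C) : conjC (a - b) = conjC a - conjC b.
Proof. exact: rmorphB. Qed.
Lemma conjM (a b : C) : conjC (a * b) = conjC a * conjC b.
Proof. exact: rmorphM. Qed.
Lemma conjR (r : R) : conjC (r%:C) = r%:C.
Proof. by apply/CrealP; rewrite complex_real. Qed.

Lemma conj_sum (J : Type) (s : seq J) (g : J -> C) :
  conjC (\sum_(i <- s) g i) = \sum_(i <- s) conjC (g i).
Proof. exact: rmorph_sum. Qed.

Lemma reC (z : C) : 0 <= z -> z = (complex.Re z)%:C.
Proof. by move=> z0; rewrite RRe_real // ger0_real. Qed.

Lemma normC_real (r : R) : `|r%:C| = `|r|%:C.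
Proof. by rewrite normc_def /= expr0n /= addr0 sqrtr_sqr. Qed.

Lemma sum_split (V : zmodType) (I : choiceType) (h : I -> V) (F G : {fset I}) :
  (G `<=` F)%fset ->
  \sum_(i <- F) h i = \sum_(i <- G) h i + \sum_(i <- (F `\` G)%fset) h i.
Proof.
move=> /fsubsetP GF.
rewrite (big_fsetID _ (fun i => i \in G)).
have -> : [fset x in F | x \in G]%fset = G.
  apply/fsetP => i; rewrite !inE.
  case: (boolP (i \in G)) => iG /=; rewrite ?andbT ?andbF //; exact: GF.
have -> : [fset x | x in F & x \notin G]%fset = (F `\` G)%fset.
  by apply/fsetP => i; rewrite !inE andbC.
by [].
Qed.

Lemma sum_mono (I : choiceType) (p : I -> R) (F G : {fset I}) :
  (forall i, 0 <= p i) -> (G `<=` F)%fset ->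
  \sum_(i <- G) p i <= \sum_(i <- F) p i.
Proof.
move=> p0 GF; rewrite (@sum_split _ _ p F G GF) lerDl; exact: sumr_ge0.
Qed.


Lemma hs_realP (I : choiceType) (K : set I) (p : I -> R) (a : R) :
  has_sum (fun z : C => `|z|) K (fun i => (p i)%:C) a%:C ->
  forall e : R, 0 < e -> exists F0 : {fset I}, (forall i, i \in F0 -> K i) /\
    forall F : {fset I}, (forall i, i \in F -> K i) -> (F0 `<=` F)%fset ->
      `|a - \sum_(i <- F) p i| < e.
Proof.
move=> hs e e0; have [|F0 [F0K hF0]] := hs e%:C; first by rewrite ltcR.
exists F0; split => // F FK F0F; have := hF0 F FK F0F.
by rewrite -rmorph_sum -rmorphB normC_real ltcR.
Qed.

Lemma hs_realI (I : choiceType) (K : set I) (p : I -> R) (a : R) :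
  (forall e : R, 0 < e -> exists F0 : {fset I}, (forall i, i \in F0 -> K i) /\
    forall F : {fset I}, (forall i, i \in F -> K i) -> (F0 `<=` F)%fset ->
      `|a - \sum_(i <- F) p i| < e) ->
  has_sum (fun z : C => `|z|) K (fun i => (p i)%:C) a%:C.
Proof.
move=> hs e e0; have e0' : 0 < complex.Re e by move: e0; rewrite ltcE => /andP[].
have eE : e = (complex.Re e)%:C by apply: reC; exact: ltW.
have [F0 [F0K hF0]] := hs _ e0'.
exists F0; split => // F FK F0F; have := hF0 F FK F0F.
by rewrite eE -rmorph_sum -rmorphB normC_real ltcR.
Qed.

Lemma smallR (x : R) : (forall e : R, 0 < e -> x < e) -> x <= 0.
Proof.
move=> h; rewrite leNgt; apply/negP => x0.
by have := h x x0; rewrite ltxx.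
Qed.

Section Frame.
Variables (I : choiceType) (fr : I -> H).
Hypothesis hpf : parseval_frame ip fr.

Definition pR x i := complex.Re (`|ip x (fr i)| ^+ 2).
Lemma pRE x i : `|ip x (fr i)| ^+ 2 = (pR x i)%:C.
Proof. by apply: reC; rewrite exprn_ge0. Qed.
Lemma pR_ge0 x i : 0 <= pR x i.
Proof. by rewrite -ler0c -pRE exprn_ge0. Qed.

Lemma parsR x : has_sum (fun z : C => `|z|) setT (fun i => (pR x i)%:C) (Q x)%:C.
Proof.
have := hpf x; rewrite hnorm_sqr QE.
have -> // : (fun i => `|ip x (fr i)| ^+ 2) = (fun i => (pR x i)%:C).
by apply: funext => i; rewrite pRE.
Qed.

Lemma bessel x (F : {fset I}) : \sum_(i <- F) pR x i <= Q x.
Proof.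
apply/ler_addgt0Pr => e e0.
have [F0 [_ hF0]] := hs_realP (parsR x) e0.
have := hF0 (F `|` F0)%fset (fun _ _ => Logic.I) (fsubsetUr _ _).
rewrite ltr_norml => /andP[h1 _].
have := sum_mono (pR_ge0 x) (fsubsetUl F F0).
move: h1; set s := \sum_(i <- _) _; set t := \sum_(i <- _) _; lra.
Qed.


Lemma synth (F : {fset I}) (d : I -> C) :
  Q (\sum_(i <- F) d i *: fr i) <= \sum_(i <- F) complex.Re (`|d i| ^+ 2).
Proof.
set x := \sum_(i <- F) d i *: fr i.
have hC : \sum_(i <- F) d i * conjC (ip x (fr i)) = ip x x.
  rewrite {3}/x ip_suml; apply: eq_bigr => i _; rewrite ipZl -ipC //.
have h0 : 0 <= \sum_(i <- F) `|d i - ip x (fr i)| ^+ 2.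
  by apply: sumr_ge0 => i _; exact: exprn_ge0.
have Ei i : `|d i - ip x (fr i)| ^+ 2 = (`|d i| ^+ 2 + `|ip x (fr i)| ^+ 2)
   - (d i * conjC (ip x (fr i)) + conjC (d i * conjC (ip x (fr i)))).
  by rewrite !normCK conjB conjM conjCK; ring.
rewrite (eq_bigr _ (fun i _ => Ei i)) sumrB !big_split /= -conj_sum hC ip_real in h0.
have e1 : \sum_(i <- F) `|d i| ^+ 2 = (\sum_(i <- F) complex.Re (`|d i| ^+ 2))%:C.
  by rewrite rmorph_sum; apply: eq_bigr => i _; apply: reC; rewrite exprn_ge0.
have e2 : \sum_(i <- F) `|ip x (fr i)| ^+ 2 = (\sum_(i <- F) pR x i)%:C.
  by rewrite rmorph_sum; apply: eq_bigr => i _; rewrite pRE.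
rewrite e1 e2 QE -!rmorphD -rmorphB ler0c in h0.
have := bessel x F; move: h0.
set A := \sum_(i <- F) _; set B := \sum_(i <- F) _; lra.
Qed.


Lemma inv_mono (N n : nat) : (N <= n)%N -> (n.+1%:R)^-1 <= (N.+1%:R)^-1 :> R.
Proof. by move=> Nn; rewrite lef_pV2 ?posrE ?ltr0Sn // ler_nat ltnS. Qed.

Lemma archi_inv (eps : R) : 0 < eps -> exists N : nat, (N.+1%:R)^-1 < eps.
Proof.
move=> e0; have ie : 0 < eps^-1 by rewrite invr_gt0.
have := archi_boundP (ltW ie).
set N := archi_bound _ => h; exists N.
rewrite -[eps]invrK ltf_pV2 ?posrE ?invr_gt0 ?ltr0Sn //.
apply: lt_le_trans h _; rewrite ler_nat; exact: leqnSn.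
Qed.

Lemma sum_exists (p : I -> R) (K : set I) (M : R) :
  (forall i, 0 <= p i) ->
  (forall F : {fset I}, (forall i, i \in F -> K i) -> \sum_(i <- F) p i <= M) ->
  exists a : R,
   (forall F : {fset I}, (forall i, i \in F -> K i) -> \sum_(i <- F) p i <= a) /\
   (forall e, 0 < e -> exists F0 : {fset I}, (forall i, i \in F0 -> K i) /\
       a - e < \sum_(i <- F0) p i).
Proof.
move=> p0 hM.
pose E := [set x | exists F : {fset I}, (forall i, i \in F -> K i) /\ x = \sum_(i <- F) p i].
have hE : has_sup E.
  split; first by exists 0, fset0; split=> [i|]; rewrite ?inE // big_seq_fset0.
  by exists M => x [F [FK ->]]; apply: hM.
exists (sup E); split.
  by move=> F FK; apply: sup_upper_bound => //; exists F.
move=> e e0; have [x [F [FK ->]] h] := sup_adherent e0 hE.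
by exists F.
Qed.

Lemma hs_of_sum (p : I -> R) (K : set I) (a : R) :
   (forall F : {fset I}, (forall i, i \in F -> K i) -> \sum_(i <- F) p i <= a) ->
   (forall e, 0 < e -> exists F0 : {fset I}, (forall i, i \in F0 -> K i) /\
       a - e < \sum_(i <- F0) p i) ->
   (forall i, 0 <= p i) ->
   has_sum (fun z : C => `|z|) K (fun i => (p i)%:C) a%:C.
Proof.
move=> h1 h2 p0; apply: hs_realI => e e0.
have [F0 [F0K hF0]] := h2 e e0; exists F0; split => // F FK F0F.
have := h1 F FK; have := sum_mono p0 F0F; move: hF0.
rewrite ltr_norml; set s := \sum_(i <- F0) _; set t := \sum_(i <- F) _.
move=> *; apply/andP; split; lra.
Qed.

Lemma posC (e : C) : 0 < e -> e = (complex.Re e)%:C /\ 0 < complex.Re e.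
Proof.
move=> e0; split; first by apply: reC; exact: ltW.
by move: e0; rewrite ltcE => /andP[].
Qed.

Hypothesis hcomp : ip_complete ip.

Lemma vec_exists (K : set I) (d : I -> C) (M : R) :
  (forall F : {fset I}, (forall i, i \in F -> K i) ->
     \sum_(i <- F) complex.Re (`|d i| ^+ 2) <= M) ->
  exists s, has_sum (hnorm ip) K (fun i => d i *: fr i) s.
Proof.
move=> hM; pose p i := complex.Re (`|d i| ^+ 2).
have p0 i : 0 <= p i by rewrite -ler0c /p -reC exprn_ge0.
have [a [ha1 ha2]] := sum_exists p0 hM.
have hF n : exists F : {fset I}, (forall i, i \in F -> K i) /\
    a - (n.+1%:R)^-1 < \sum_(i <- F) p i.
  by apply: ha2; rewrite invr_gt0 ltr0Sn.
case: (choice hF) => Fn hFn.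
pose G := fix G (n : nat) : {fset I} :=
  match n with 0 => Fn 0%N | m.+1 => (G m `|` Fn m.+1)%fset end.
have GK n i : i \in G n -> K i.
  elim: n i => [|n IH] i /=; first by apply: (hFn 0%N).1.
  by rewrite in_fsetU => /orP[/IH|/(hFn n.+1).1].
have Gmono n m : (n <= m)%N -> (G n `<=` G m)%fset.
  elim: m => [|m IH]; first by rewrite leqn0 => /eqP ->; exact: fsubset_refl.
  rewrite leq_eqVlt => /orP[/eqP ->|]; first exact: fsubset_refl.
  by rewrite ltnS => /IH h; apply: fsubset_trans h _; apply: fsubsetUl.
have FnG n : (Fn n `<=` G n)%fset.
  by case: n => [|n] /=; [exact: fsubset_refl | exact: fsubsetUr].
have tail n (F : {fset I}) : (forall i, i \in F -> K i) -> (G n `<=` F)%fset ->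
    \sum_(i <- F) p i - \sum_(i <- G n) p i < (n.+1%:R)^-1.
  move=> FK GF; have := ha1 F FK; have := sum_mono p0 (FnG n).
  have := (hFn n).2; set x := \sum_(i <- Fn n) _; set y := \sum_(i <- G n) _.
  set z := \sum_(i <- F) _; set w := _^-1; lra.
pose sv (F : {fset I}) := \sum_(i <- F) d i *: fr i.
have diffQ n (F : {fset I}) : (forall i, i \in F -> K i) -> (G n `<=` F)%fset ->
    Q (sv F - sv (G n)) < (n.+1%:R)^-1.
  move=> FK GF; apply: le_lt_trans (tail n F FK GF).
  rewrite /sv (sum_split _ GF) [X in Q (X - _)]addrC addrK.
  rewrite (sum_split p GF) [X in _ <= X - _]addrC addrK.
  exact: synth.
have Qsym x y : Q (x - y) = Q (y - x) by rewrite -QN opprB.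
have cauchy : forall e : C, 0 < e -> exists N : nat, forall m n : nat,
    (N <= m)%N -> (N <= n)%N -> hnorm ip (sv (G m) - sv (G n)) < e.
  move=> e /posC [-> er0].
  have [N hN] := archi_inv (exprn_gt0 2 er0).
  exists N => m n Nm Nn; rewrite hnorm_lt //.
  case: (leqP n m) => nm.
    apply: lt_trans (diffQ n (G m) (GK m) (Gmono _ _ nm)) _.
    exact: le_lt_trans (inv_mono Nn) hN.
  rewrite Qsym; apply: lt_trans (diffQ m (G n) (GK n) (Gmono _ _ (ltnW nm))) _.
  exact: le_lt_trans (inv_mono Nm) hN.
have [l hl] := hcomp cauchy.
exists l => e /posC [eE er0]; set r := complex.Re e in eE er0 *; rewrite eE.
have er2 : 0 < r / 2 by rewrite divr_gt0.
have [N1 hN1] : exists N : nat, forall n : nat, (N <= n)%N -> hnorm ip (sv (G n) - l) < (r/2)%:C.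
  by apply: hl; rewrite ltcR.
have [N2 hN2] := archi_inv (exprn_gt0 2 er2).
set n := maxn N1 N2.
exists (G n); split; first exact: GK.
move=> F FK GF; rewrite hnorm_lt //.
have h1 : Q (sv (G n) - l) < (r/2)^+2 by rewrite -hnorm_lt //; apply: hN1; exact: leq_maxl.
have h2 : Q (sv F - sv (G n)) < (r/2)^+2.
  apply: lt_le_trans (diffQ n F FK GF) _; apply: ltW.
  exact: le_lt_trans (inv_mono (leq_maxr N1 N2)) hN2.
have -> : l - \sum_(i <- F) d i *: fr i = (l - sv (G n)) + (sv (G n) - sv F).
  by rewrite addrA subrK.
have := Q_add_le (l - sv (G n)) (sv (G n) - sv F).
rewrite Qsym in h1; rewrite Qsym in h2.
have -> : r ^+ 2 = 4 * (r/2)^+2 by field.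
move: h1 h2; set t := (r/2)^+2; set A := Q _; set B := Q _; set D := Q _; lra.
Qed.


Lemma small0C (w : C) : (forall e : R, 0 < e -> `|w| < e%:C) -> w = 0.
Proof.
move=> h; apply/normr0_eq0.
have n0 := normr_ge0 w; rewrite (reC n0).
have h1 : complex.Re `|w| <= 0.
  by apply: smallR => e e0; rewrite -ltcR -(reC n0); exact: h.
have h2 : 0 <= complex.Re `|w| by rewrite -ler0c -(reC n0).
by rewrite (@le_anti _ _ (complex.Re `|w|) 0) ?h1 ?h2.
Qed.

Lemma ip_gt0 x : x != 0 -> 0 < ip x x.
Proof. by move=> x0; rewrite lt_def ip_ge0 andbT; apply/eqP => /ip_eq0; apply/eqP. Qed.

Lemma hs_filt (V : zmodType) (nrm : V -> C) (K : set I) (g : I -> V) (s : V) :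
  has_sum nrm K g s -> forall e : C, 0 < e ->
  exists F0 : {fset I}, (forall i, i \in F0 -> K i) /\
    forall F : {fset I}, (F0 `<=` F)%fset ->
      nrm (s - \sum_(i <- F | `[< K i >]) g i) < e.
Proof.
move=> hs e e0; have [F0 [F0K hF0]] := hs e e0; exists F0; split => // F F0F.
rewrite (big_fset_condE _ F (fun i => `[< K i >])); apply: hF0.
  by move=> i; rewrite !inE => /andP[_ /asboolP].
apply/fsubsetP => i iF0; rewrite !inE (fsubsetP F0F _ iF0) /=.
by apply/asboolP; apply: F0K.
Qed.

Lemma ip_lim (K : set I) (v : I -> H) (s : H) :
  has_sum (hnorm ip) K v s -> forall (g : H) (e : R), 0 < e ->
  exists F0 : {fset I}, (forall i, i \in F0 -> K i) /\
    forall F : {fset I}, (F0 `<=` F)%fset ->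
      `|ip s g - \sum_(i <- F | `[< K i >]) ip (v i) g| < e%:C.
Proof.
move=> hs g e e0.
case: (eqVneq g 0) => [->|g0].
  exists fset0; split => [i|F _]; first by rewrite inE.
  by rewrite ip0r big1 ?subr0 ?normr0 ?ltcR // => i _; rewrite ip0r.
have hg : 0 < hnorm ip g by rewrite hnormE sqrtC_gt0 ip_gt0.
have [|F0 [F0K hF0]] := hs_filt hs (e := e%:C / hnorm ip g).
  by rewrite divr_gt0 // ltcR.
exists F0; split => // F F0F.
rewrite -ip_suml -ipBl; apply: le_lt_trans (CS _ _) _.
by rewrite -ltr_pdivlMr //; apply: hF0.
Qed.

Lemma lim_unique (z a : C) (u : {fset I} -> C) :
  (forall e : R, 0 < e -> exists F0 : {fset I}, forall F, (F0 `<=` F)%fset -> `|z - u F| < e%:C) ->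
  (forall e : R, 0 < e -> exists F0 : {fset I}, forall F, (F0 `<=` F)%fset -> `|a - u F| < e%:C) ->
  z = a.
Proof.
move=> h1 h2; apply/eqP; rewrite -subr_eq0; apply/eqP; apply: small0C => e e0.
have e2 : 0 < e / 2 by rewrite divr_gt0.
have [F1 hF1] := h1 _ e2; have [F2 hF2] := h2 _ e2.
have := hF1 (F1 `|` F2)%fset (fsubsetUl _ _).
have := hF2 (F1 `|` F2)%fset (fsubsetUr _ _).
set U := u _ => ha hz.
have -> : z - a = (z - U) - (a - U) by rewrite opprB addrA subrK.
apply: le_lt_trans (ler_normB _ _) _.
have -> : e%:C = (e / 2)%:C + (e / 2)%:C by rewrite -rmorphD; congr (_%:C); field.
exact: ltrD.
Qed.


Lemma tail_small x (e : R) : 0 < e -> exists F0 : {fset I}, forall F : {fset I},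
  (F0 `<=` F)%fset -> 0 <= Q x - \sum_(i <- F) pR x i < e.
Proof.
move=> e0; have [F0 [_ h]] := hs_realP (parsR x) e0.
exists F0 => F F0F; have := h F (fun _ _ => Logic.I) F0F; have := bessel x F.
rewrite ltr_norml; set t := \sum_(i <- F) _ => h1 /andP[h2 h3].
apply/andP; split; lra.
Qed.

Lemma polar (F : {fset I}) x y :
  2 * ((ip x y + ip y x) - \sum_(i <- F) (ip x (fr i) * conjC (ip y (fr i))
        + conjC (ip x (fr i) * conjC (ip y (fr i)))))
  = ((Q (x + y) - \sum_(i <- F) pR (x + y) i) - (Q (x - y) - \sum_(i <- F) pR (x - y) i))%:C.
Proof.
have rB (a b : R) : (a - b)%:C = a%:C - b%:C :> C by rewrite rmorphB.
have sE z : (\sum_(i <- F) pR z i)%:C = \sum_(i <- F) `|ip z (fr i)| ^+ 2.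
  by rewrite rmorph_sum; apply: eq_bigr => i _; rewrite pRE.
rewrite !rB !sE -!QE.
have E i : `|ip (x + y) (fr i)| ^+ 2 - `|ip (x - y) (fr i)| ^+ 2 =
  2 * (ip x (fr i) * conjC (ip y (fr i)) + conjC (ip x (fr i) * conjC (ip y (fr i)))).
  by rewrite !normCK ipDl ipBl conjD conjB conjM conjCK; ring.
set S1 := \sum_(i <- F) `|ip (x + y) _| ^+ 2.
set S2 := \sum_(i <- F) `|ip (x - y) _| ^+ 2.
have -> : S1 = S2 + (S1 - S2) by rewrite addrC subrK.
rewrite /S1 /S2 -sumrB (eq_bigr _ (fun i _ => E i)) -mulr_sumr.
rewrite !ipDl !ipDr ?ipNl ?ipNr ?ipDr; ring.
Qed.


Lemma recon (J : set I) (f sJ sJc : H) :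
  has_sum (hnorm ip) J (fun i => ip f (fr i) *: fr i) sJ ->
  has_sum (hnorm ip) (~` J) (fun i => ip f (fr i) *: fr i) sJc -> f = sJ + sJc.
Proof.
move=> hJ hJc.
have key x y : 2 * ip (x - y) (x - y) =
    (ip x (x - y) + ip (x - y) x) - (ip y (x - y) + ip (x - y) y).
  by rewrite !ipDl !ipDr ?ipNl ?ipNr ?ipDr; ring.
set s := sJ + sJc; set d := f - s.
suff : d = 0 by move/eqP; rewrite subr_eq0 => /eqP.
apply: ip_eq0; apply: small0C => e e0.
set e' := e / 9; have e'0 : 0 < e' by rewrite divr_gt0.
have [Fa ha] := tail_small (f + d) e'0.
have [Fb hb] := tail_small (f - d) e'0.
have [FJ [_ hFJ]] := ip_lim hJ d e'0.
have [FJc [_ hFJc]] := ip_lim hJc d e'0.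
set F := (Fa `|` Fb `|` FJ `|` FJc)%fset.
have sa : (Fa `<=` F)%fset by apply/fsubsetP => i hi; rewrite !inE hi ?orbT.
have sb : (Fb `<=` F)%fset by apply/fsubsetP => i hi; rewrite !inE hi ?orbT.
have sJ' : (FJ `<=` F)%fset by apply/fsubsetP => i hi; rewrite !inE hi ?orbT.
have sJc' : (FJc `<=` F)%fset by apply/fsubsetP => i hi; rewrite !inE hi ?orbT.
set S := \sum_(i <- F) ip f (fr i) * conjC (ip d (fr i)).
have hS : S = \sum_(i <- F | `[< J i >]) ip (ip f (fr i) *: fr i) d
            + \sum_(i <- F | `[< (~` J) i >]) ip (ip f (fr i) *: fr i) d.
  rewrite /S (bigID (fun i => `[< J i >])) /=; congr (_ + _).
    by apply: eq_bigr => i _; rewrite ipZl -ipC.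
  apply: eq_big => [i|i _]; first by rewrite /setC /= asbool_neg.
  by rewrite ipZl -ipC.
have hsd : `|ip s d - S| < (2 * e')%:C.
  rewrite hS /s ipDl.
  set A := \sum_(i <- F | _) _; set B := \sum_(i <- F | _) _.
  have -> : ip sJ d + ip sJc d - (A + B) = (ip sJ d - A) + (ip sJc d - B) by ring.
  apply: le_lt_trans (ler_normD _ _) _.
  have -> : (2 * e')%:C = e'%:C + e'%:C by rewrite -rmorphD; congr (_%:C); ring.
  by apply: ltrD; [apply: hFJ | apply: hFJc].
have hP := polar F f d.
rewrite big_split /= -conj_sum -/S in hP.
have := ha F sa; have := hb F sb.
set Ta := Q (f + d) - _; set Tb := Q (f - d) - _ => hTb hTa.
have hT : `|(Ta - Tb)%:C| < e'%:C.
  rewrite normC_real ltcR ltr_norml; move: hTa hTb => /andP[? ?] /andP[? ?].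
  apply/andP; split; lra.
have k := key f s; rewrite -/d [ip d s]ipC in k.
have E4 : 4 * ip d d = (Ta - Tb)%:C - 2 * ((ip s d - S) + conjC (ip s d - S)).
  rewrite -hP conjB; have -> : (4 : C) * ip d d = 2 * (2 * ip d d) by ring.
  rewrite k; ring.
set w := ip s d - S.
have h4 : `|4 * ip d d| < e%:C.
  rewrite E4; apply: le_lt_trans (ler_normB _ _) _.
  have hc : `|2 * (w + conjC w)| <= 4 * `|w|.
    rewrite normrM normr_nat (_ : (4 : C) = 2 * 2); last by rewrite -natrM.
    rewrite -mulrA ler_pM2l //.
    by apply: le_trans (ler_normD _ _) _; rewrite norm_conjC mulr2n mulrDl mul1r.
  have h2 : 4 * `|w| < 4 * (2 * e')%:C by rewrite ltr_pM2l.
  have -> : e%:C = e'%:C + 4 * (2 * e')%:C.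
    have h44 : (4 : C) = (4 : R)%:C by rewrite rmorph_nat.
    by rewrite h44 -!rmorphM -!rmorphD /e'; congr (_%:C); field.
  exact: ltr_leD hT (le_trans hc (ltW h2)).
apply: le_lt_trans h4.
by rewrite normrM normr_nat ler_peMl // ler1n.
Qed.



Lemma ip_aJ (K : set I) (f sK : H) (a : R) :
  has_sum (hnorm ip) K (fun i => ip f (fr i) *: fr i) sK ->
  has_sum (fun z : C => `|z|) K (fun i => (pR f i)%:C) a%:C -> ip sK f = a%:C.
Proof.
move=> hs ha; apply: (lim_unique (u := fun F => \sum_(i <- F | `[< K i >]) (pR f i)%:C)).
  move=> e e0; have [F0 [_ hF0]] := ip_lim hs f e0; exists F0 => F F0F.
  have := hF0 F F0F.
  suff -> : \sum_(i <- F | `[< K i >]) ip (ip f (fr i) *: fr i) f =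
            \sum_(i <- F | `[< K i >]) (pR f i)%:C by [].
  by apply: eq_bigr => i _; rewrite ipZl [ip (fr i) f]ipC -normCK pRE.
move=> e e0; have [|F0 [_ hF0]] := hs_filt ha (e := e%:C); first by rewrite ltcR.
by exists F0.
Qed.

End Frame.
End IP.

Theorem theorem3p2 (R : realType) (H : lmodType R[i]) (ip : H -> H -> R[i])
    (I : choiceType) (fr : I -> H) :
  is_hilbert ip -> parseval_frame ip fr ->
  forall (J : set I) (f : H),
  exists (aJ aJc : R[i]) (sJ sJc : H),
    [/\ has_sum (fun z : R[i] => `|z|) J (fun i => `|ip f (fr i)| ^+ 2) aJ,
        has_sum (fun z : R[i] => `|z|) (~` J) (fun i => `|ip f (fr i)| ^+ 2) aJc,
        has_sum (hnorm ip) J (fun i => ip f (fr i) *: fr i) sJ,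
        has_sum (hnorm ip) (~` J) (fun i => ip f (fr i) *: fr i) sJc &
        aJ - hnorm ip sJ ^+ 2 = aJc - hnorm ip sJc ^+ 2].
Proof.
move=> [hip hcomp] hpf J f.
have p0 := pR_ge0 ip fr f.
have hM (K : set I) : forall F : {fset I}, (forall i, i \in F -> K i) ->
    \sum_(i <- F) pR ip fr f i <= Q ip f.
  by move=> F _; exact: (bessel hip hpf f F).
have [aJ [a1 a2]] := sum_exists p0 (hM J).
have [aJc [c1 c2]] := sum_exists p0 (hM (~` J)).
have haJ := hs_of_sum a1 a2 p0.
have haJc := hs_of_sum c1 c2 p0.
have [sJ hsJ] := vec_exists hip hpf hcomp (d := fun i => ip f (fr i)) (hM J).
have [sJc hsJc] := vec_exists hip hpf hcomp (d := fun i => ip f (fr i)) (hM (~` J)).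
have fE : (fun i => `|ip f (fr i)| ^+ 2) = (fun i => (pR ip fr f i)%:C).
  by apply: funext => i; apply: pRE.
exists aJ%:C, aJc%:C, sJ, sJc; split; rewrite ?fE //.
have A := ip_aJ hip hsJ haJ.
have B := ip_aJ hip hsJc haJc.
have Cr := recon hip hpf hsJ hsJc.
have h : ip sJ sJc = aJ%:C - ip sJ sJ.
  by rewrite -A {1}Cr (ipDr hip); ring.
have hc : conjC (ip sJ sJc) = ip sJ sJc.
  by rewrite h (QE hip) conjB !conjR.
rewrite !hnorm_sqr -A -B Cr !(ipDr hip) [ip sJc sJ](ipC hip) hc; ring.
Qed.
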